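(* For every $d\ge 2$, $\mathcal{NN}_{\mathrm{LReLU}}(d,d,d)$ compactly approximates $\mathrm{INN}_{\mathrm{ACF}_d}$: for every $f\in\mathrm{INN}_{\mathrm{ACF}_d}$, every compact $K\subset\mathbb{R}^d$ and every $\epsilon>0$ there exists $g\in\mathcal{NN}_{\mathrm{LReLU}}(d,d,d)$ with $\sup_{x\in K}\|f(x)-g(x)\|_\infty<\epsilon$.
   Context: For $\beta\in\mathbb{R}$, $\mathrm{LReLU}_\beta(x)=x$ if $x\ge 0$ and $\beta x$ if $x<0$, applied componentwise to vectors. $\mathcal{NN}_{\mathrm{LReLU}}(d,d,d)$ is the set of all maps $W_{N+1}\circ\mathrm{LReLU}_{\beta_N}\circ W_N\circ\cdots\circ\mathrm{LReLU}_{\beta_1}\circ W_1:\mathbb{R}^d\to\mathbb{R}^d$ with $N\in\mathbb{N}_0$, $\beta_i\in\mathbb{R}$, integers $1\le d_1,\dots,d_N\le d$, $d_0=d_{N+1}=d$, and $W_i:\mathbb{R}^{d_{i-1}}\to\mathbb{R}^{d_i}$ affine. $\mathrm{ACF}_d$ (single-coordinate affine coupling flows) is the set of maps $\mathbb{R}^d\to\mathbb{R}^d$ of the form $x\mapsto(x_1,\dots,x_{d-1},\exp(s(x_{1:d-1}))\,x_d+t(x_{1:d-1}))$ with $s,t:\mathbb{R}^{d-1}\to\mathbb{R}$ continuous, where $x_{1:d-1}=(x_1,\dots,x_{d-1})$. For a set $\mathcal{G}$ of invertible maps $\mathbb{R}^d\to\mathbb{R}^d$, $\mathrm{INN}_{\mathcal{G}}$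 is the set of all compositions $W_1\circ g_1\circ W_2\circ g_2\circ\cdots\circ W_n\circ g_n\circ W_{n+1}$ with $n\in\mathbb{N}$, $g_i\in\mathcal{G}$ and $W_i$ invertible affine maps of $\mathbb{R}^d$. *)

(* Defs.v *)
From HB Require Import structures.
From mathcomp Require Import all_boot all_order all_algebra.
From mathcomp Require Import all_classical all_reals all_analysis.
Set Implicit Arguments. Unset Strict Implicit. Unset Printing Implicit Defensive.
Import Order.TTheory GRing.Theory Num.Theory.
Import numFieldTopology.Exports numFieldNormedType.Exports.
Local Open Scope ring_scope.
Local Open Scope classical_set_scope.

Section Defs.
Variable R : realType.

Definition lrelu (beta : R) (x : R) : R := if 0 <= x then x else beta * x.

Definition lrelu_vec n (beta : R) (v : 'rV[R]_n) : 'rV[R]_n := map_mx (lrelu beta) v.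

Definition affine m k (A : 'M[R]_(m, k)) (b : 'rV[R]_k) : 'rV[R]_m -> 'rV[R]_k :=
  fun x => x *m A + b.

(* nn_from d m f : f : R^m -> R^d is of the form
   W_{N+1} o LReLU_{beta_N} o W_N o ... o LReLU_{beta_1} o W_1
   with N >= 0 and all hidden widths d_i in [1, d]. *)
Inductive nn_from (d : nat) : forall m, ('rV[R]_m -> 'rV[R]_d) -> Prop :=
| nn_out m (A : 'M[R]_(m, d)) (b : 'rV[R]_d) : @nn_from d m (affine A b)
| nn_layer m k (A : 'M[R]_(m, k)) (b : 'rV[R]_k) (beta : R)
    (g : 'rV[R]_k -> 'rV[R]_d) :
    (1 <= k)%N -> (k <= d)%N -> @nn_from d k g ->
    @nn_from d m (fun x => g (lrelu_vec beta (affine A b x))).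

Definition NN_LReLU (d : nat) : set ('rV[R]_d -> 'rV[R]_d) := [set f | @nn_from d d f].

Definition front d (x : 'rV[R]_d) : 'rV[R]_(d.-1) :=
  \row_(j < d.-1) x ord0 (widen_ord (leq_pred d) j).

Definition ACF (d : nat) : set ('rV[R]_d -> 'rV[R]_d) :=
  [set f : 'rV[R]_d -> 'rV[R]_d | exists s t : 'rV[R]_(d.-1) -> R, continuous s /\ continuous t /\
     forall x : 'rV[R]_d, f x = \row_(i < d) (if (i < d.-1)%N then x ord0 i
                                  else expR (s (@front d x)) * x ord0 i + t (@front d x))].

Definition inv_affine (d : nat) : set ('rV[R]_d -> 'rV[R]_d) :=
  [set W | exists (A : 'M[R]_d) (b : 'rV[R]_d), A \in unitmx /\ W = affine A b].

(* inn_tail G h : h = W_k o g_k o ... o W_n o g_n o W_{n+1} (possibly just W_{n+1}) *)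
Inductive inn_tail (d : nat) (G : set ('rV[R]_d -> 'rV[R]_d)) :
    ('rV[R]_d -> 'rV[R]_d) -> Prop :=
| inn_last W : @inv_affine d W -> @inn_tail d G W
| inn_step (W g h : 'rV[R]_d -> 'rV[R]_d) : @inv_affine d W -> G g -> @inn_tail d G h ->
    @inn_tail d G (W \o g \o h).

(* INN_G : W_1 o g_1 o W_2 o ... o W_n o g_n o W_{n+1}, n >= 1 *)
Definition INN (d : nat) (G : set ('rV[R]_d -> 'rV[R]_d)) :
    set ('rV[R]_d -> 'rV[R]_d) :=
  [set f | exists W g h, @inv_affine d W /\ G g /\ @inn_tail d G h /\ f = W \o g \o h].

Definition norm_inf d (v : 'rV[R]_d) : R := \big[Num.max/0]_(i < d) `|v ord0 i|.

End Defs.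

(* Main.v *)
Require Import Defs.
From HB Require Import structures.
From mathcomp Require Import all_boot all_order all_algebra.
From mathcomp Require Import all_classical all_reals all_analysis.
From mathcomp Require Import ring lra.
Import Order.TTheory GRing.Theory Num.Theory Num.Def.
Import numFieldTopology.Exports numFieldNormedType.Exports.
Local Open Scope ring_scope.
Local Open Scope classical_set_scope.
Set Implicit Arguments. Unset Strict Implicit. Unset Printing Implicit Defensive.

Section NNcomp.
Variable R : realType.

Lemma nn_pre (d m : nat) (g : 'rV[R]_m -> 'rV[R]_d) : @nn_from R d m g ->
  forall m' (A : 'M[R]_(m', m)) b, @nn_from R d m' (fun x => g (affine A b x)).
Proof.
case=> {m g} [m A2 b2|m k A2 b2 beta g hk1 hkd hg] m' A b.
- have -> : (fun x => affine A2 b2 (affine A b x)) = affine (A *m A2) (b *m A2 + b2).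
    by apply: funext => x; rewrite /affine mulmxDl mulmxA addrA.
  exact: nn_out.
- have -> : (fun x => g (lrelu_vec beta (affine A2 b2 (affine A b x)))) =
     (fun x => g (lrelu_vec beta (affine (A *m A2) (b *m A2 + b2) x))).
    by apply: funext => x; rewrite /affine mulmxDl mulmxA addrA.
  exact: nn_layer.
Qed.

Lemma nn_comp (d m : nat) (h : 'rV[R]_m -> 'rV[R]_d) (g : 'rV[R]_d -> 'rV[R]_d) :
  @nn_from R d m h -> @nn_from R d d g -> @nn_from R d m (fun x => g (h x)).
Proof.
move=> hh hg; elim: hh => {m h} [m A b|m k A b beta h hk1 hkd _ IH].
- exact: nn_pre.
- exact: (nn_layer _ _ _ hk1 hkd IH).
Qed.

Lemma mxnorm_coord m k (v : 'M[R]_(m,k)) i j : `|v i j| <= `|v|.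
Proof.
rewrite [X in _ <= X]/normr /= mx_normrE.
exact: (le_bigmax _ (fun ij : 'I_m * 'I_k => `|v ij.1 ij.2|) (i,j)).
Qed.

Lemma mxnorm_le m k (v : 'M[R]_(m,k)) c : 0 <= c ->
  (forall i j, `|v i j| <= c) -> `|v| <= c.
Proof.
move=> c0 H; rewrite [leLHS]/normr /= mx_normrE; by apply: bigmax_le => // ij _; exact: H.
Qed.

Definition cont (U1 U2 : normedModType R) (f : U1 -> U2) :=
  forall x (e : R), 0 < e -> exists d : R, 0 < d /\ forall y, `|x - y| < d -> `|f x - f y| < e.

Lemma cont_comp (U1 U2 U3 : normedModType R) (f : U1 -> U2) (g : U2 -> U3) :
  cont f -> cont g -> cont (fun x => g (f x)).
Proof.
move=> cf cg x e e0; have [d1 [d10 H1]] := cg (f x) e e0.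
have [d2 [d20 H2]] := cf x d1 d10; exists d2; split => // y xy.
exact/H1/H2.
Qed.

Lemma cont_continuous (U1 U2 : normedModType R) (f : U1 -> U2) :
  cont f -> continuous f.
Proof.
move=> cf x; apply/cvgrPdist_lt => e e0; have [d [d0 H]] := cf x e e0.
apply/nbhs_normP; exists d => //= y; rewrite -ball_normE /ball_ /=.
Qed.

Lemma continuous_cont (U1 U2 : normedModType R) (f : U1 -> U2) :
  continuous f -> cont f.
Proof.
move=> cf x e e0; have := cf x; move/cvgrPdist_lt/(_ e e0)/nbhs_normP => [d d0 H].
by exists d; split => // y xy; apply: H.
Qed.

Lemma cont_lip (U1 U2 : normedModType R) (f : U1 -> U2) (L : R) :
  0 < L -> (forall x y, `|f x - f y| <= L * `|x - y|) -> cont f.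
Proof.
move=> L0 H x e e0; exists (e / L); split; first by rewrite divr_gt0.
move=> y xy; apply: le_lt_trans (H x y) _.
by rewrite -ltr_pdivlMl // mulrC.
Qed.

Lemma hgt0 (e : R) : 0 < e -> 0 < e / 2.
Proof. by move=> h; rewrite divr_gt0. Qed.

End NNcomp.

Section Space.
Variable R : realType.
Variable n : nat.
Local Notation V := 'rV[R]_(n.+1).
Local Notation W := 'rV[R]_n.

Definition ForM (G : V -> R) (x : V) : V :=
  \row_j (if j == ord_max then x 0 j + G x else x 0 j).

Lemma ForME G x j : ForM G x 0 j = if j == ord_max then x 0 j + G x else x 0 j.
Proof. by rewrite mxE. Qed.

Definition frt (x : V) : W := @front R n.+1 x.

Lemma frtE x j : frt x 0 j = x 0 (widen_ord (leq_pred n.+1) j).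
Proof. by rewrite mxE. Qed.

Lemma widen_neq (j : 'I_n) : widen_ord (leq_pred n.+1) j != ord_max.
Proof. by apply/eqP => /(congr1 val) /= H; move: (ltn_ord j); rewrite H ltnn. Qed.

Lemma frt_ForM G x : frt (ForM G x) = frt x.
Proof. by apply/rowP => j; rewrite !mxE (negbTE (widen_neq j)). Qed.

Lemma ForM_last G x : ForM G x 0 ord_max = x 0 ord_max + G x.
Proof. by rewrite ForME eqxx. Qed.

Lemma ForM_comp G1 G2 x :
  ForM G2 (ForM G1 x) = ForM (fun y => G1 y + G2 (ForM G1 y)) x.
Proof.
apply/rowP => j; rewrite !ForME; case: eqP => // ->.
by rewrite addrA.
Qed.

Lemma ForM_ext G1 G2 x : G1 x = G2 x -> ForM G1 x = ForM G2 x.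
Proof. by move=> H; apply/rowP => j; rewrite !ForME H. Qed.

Lemma ForM_dist G1 G2 (x y : V) :
  `|ForM G1 x - ForM G2 y| <= `|x - y| + `|G1 x - G2 y|.
Proof.
apply: mxnorm_le; first by apply: addr_ge0.
move=> i j; rewrite ord1 !mxE; case: eqP => _.
- rewrite (_ : _ - _ = (x 0 j - y 0 j) + (G1 x - G2 y)); last by ring.
  apply: le_trans (ler_normD _ _) _; rewrite lerD2r.
  by have := mxnorm_coord (x - y) 0 j; rewrite !mxE.
- have := mxnorm_coord (x - y) 0 j; rewrite !mxE => H.
  by apply: le_trans H _; rewrite lerDl.
Qed.

Lemma ForM_dist1 G1 G2 x : `|ForM G1 x - ForM G2 x| <= `|G1 x - G2 x|.
Proof. by have := ForM_dist G1 G2 x x; rewrite subrr normr0 add0r. Qed.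

Lemma cont_ForM G : cont G -> cont (ForM G).
Proof.
move=> cG x e e0; have [d [d0 H]] := cG x (e/2) (hgt0 e0).
exists (Num.min d (e/2)); split; first by rewrite lt_min d0 divr_gt0.
move=> y; rewrite lt_min => /andP[xy1 xy2].
apply: le_lt_trans (ForM_dist _ _ _ _) _.
by rewrite (splitr e) ltrD // H.
Qed.

Lemma frt_dist (x y : V) : `|frt x - frt y| <= `|x - y|.
Proof.
apply: mxnorm_le => // i j; rewrite ord1 !mxE.
by have := mxnorm_coord (x - y) 0 (widen_ord (leq_pred n.+1) j); rewrite !mxE.
Qed.

Lemma cont_frt : cont frt.
Proof. by apply: (@cont_lip _ _ _ _ 1) => // x y; rewrite mul1r frt_dist. Qed.

Lemma coord_dist (x y : V) j : `|x 0 j - y 0 j| <= `|x - y|.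
Proof. by have := mxnorm_coord (x - y) 0 j; rewrite !mxE. Qed.

Lemma cont_coord j : cont (fun x : V => x 0 j).
Proof. by apply: (@cont_lip _ _ _ _ 1) => // x y; rewrite mul1r coord_dist. Qed.

Definition sh (phi : W -> R) := ForM (fun x => phi (frt x)).
Definition lift1 (f : R -> R) := ForM (fun x => f (x 0 ord_max) - x 0 ord_max).

Lemma lift1_last f x : lift1 f x 0 ord_max = f (x 0 ord_max).
Proof. by rewrite ForM_last addrC subrK. Qed.

Lemma lift1_comp f g x : lift1 f (lift1 g x) = lift1 (fun y => f (g y)) x.
Proof.
rewrite /lift1 ForM_comp; apply: ForM_ext.
by have := lift1_last g x; rewrite /lift1 => ->; ring.
Qed.

Lemma cont_sh phi : cont phi -> cont (sh phi).
Proof. by move=> c; apply: cont_ForM; apply: cont_comp c; apply: cont_frt. Qed.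

Lemma cont_R_sub (U : normedModType R) (f g : U -> R) : cont f -> cont g ->
  cont (fun x => f x - g x).
Proof.
move=> cf cg x e e0.
have [d1 [d10 H1]] := cf x (e/2) (hgt0 e0).
have [d2 [d20 H2]] := cg x (e/2) (hgt0 e0).
exists (Num.min d1 d2); split; first by rewrite lt_min d10 d20.
move=> y; rewrite lt_min => /andP[xy1 xy2].
rewrite (_ : _ - _ = (f x - f y) - (g x - g y)); last by ring.
apply: le_lt_trans (ler_normB _ _) _.
by rewrite (splitr e) ltrD // ?H1 ?H2.
Qed.

Lemma cont_lift1 f : cont f -> cont (lift1 f).
Proof.
move=> c; apply: cont_ForM; apply: cont_R_sub; last exact: cont_coord.
by apply: cont_comp c; apply: cont_coord.
Qed.

End Space.

Section Cpt.
Variable R : realType.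

Lemma cover_seq (U : normedModType R) (K : set U) (r : U -> R) :
  compact K -> (forall x, K x -> 0 < r x) ->
  exists cs : seq U, (forall c, c \in cs -> K c) /\
    forall x, K x -> exists2 c, c \in cs & `|c - x| < r c.
Proof.
move=> cK rp; rewrite compact_cover in cK.
have [] := cK U K (fun c => ball c (r c)) (fun i _ => ball_open _ _).
  by move=> x Kx; exists x => //; apply: ballxx; exact: rp.
move=> D' sD' cov; exists (finmap.enum_fset D'); split.
  by move=> c cD; have := sD' c cD; rewrite inE.
move=> x /cov [c cD bc]; exists c => //.
by move: bc; rewrite -ball_normE.
Qed.

Lemma seq_min (T : eqType) (cs : seq T) (g : T -> R) :
  (forall c, c \in cs -> 0 < g c) ->
  exists d, 0 < d /\ forall c, c \in cs -> d <= g c.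
Proof.
elim: cs => [|a cs IH] H; first by exists 1.
have [d [d0 Hd]] : exists d, 0 < d /\ forall c, c \in cs -> d <= g c.
  by apply: IH => c cc; apply: H; rewrite in_cons cc orbT.
exists (Num.min d (g a)); split.
  by rewrite lt_min d0 H // in_cons eqxx.
move=> c; rewrite in_cons => /orP[/eqP ->|cc]; first by rewrite ge_min lexx orbT.
by rewrite ge_min Hd.
Qed.

Lemma seq_max (T : eqType) (cs : seq T) (g : T -> R) :
  exists B, 0 <= B /\ forall c, c \in cs -> g c <= B.
Proof.
elim: cs => [|a cs [B [B0 HB]]]; first by exists 0.
exists (Num.max B (g a)); split; first by rewrite le_max B0.
move=> c; rewrite in_cons => /orP[/eqP ->|cc]; first by rewrite le_max lexx orbT.
by rewrite le_max HB.
Qed.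

Lemma unif (U1 U2 : normedModType R) (f : U1 -> U2) (K : set U1) (e : R) :
  cont f -> compact K -> 0 < e ->
  exists d, 0 < d /\ forall x y, K x -> `|x - y| < d -> `|f x - f y| < e.
Proof.
move=> cf cK e0.
have [r rP] := choice (fun x => cf x (e/2) (hgt0 e0)).
have [cs [csK cov]] := @cover_seq _ K (fun c => r c / 2) cK (fun x _ => hgt0 (rP x).1).
have [d [d0 Hd]] := @seq_min _ cs (fun c => r c / 2) (fun c _ => hgt0 (rP c).1).
exists d; split => // x y Kx xy.
have [c cc cx] := cov x Kx.
have cy : `|c - y| < r c.
  rewrite (_ : c - y = (c - x) + (x - y)); last by rewrite addrA subrK.
  apply: le_lt_trans (ler_normD _ _) _.
  by rewrite (splitr (r c)) ltrD // (lt_le_trans xy) // Hd.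
have rc0 := (rP c).1.
have h1 : `|f c - f x| < e / 2 by apply: (rP c).2; lra.
have h2 : `|f c - f y| < e / 2 by apply: (rP c).2.
rewrite (_ : f x - f y = (f c - f y) - (f c - f x)); last first.
  by rewrite [in RHS]opprB [in RHS]addrC [in RHS]addrA [in RHS]subrK.
apply: le_lt_trans (ler_normB _ _) _.
by rewrite (splitr e) ltrD.
Qed.

Lemma cont_bounded (U1 U2 : normedModType R) (f : U1 -> U2) (K : set U1) :
  cont f -> compact K -> exists B, 0 <= B /\ forall x, K x -> `|f x| <= B.
Proof.
move=> cf cK.
have [r rP] := choice (fun x => cf x 1 ltr01).
have [cs [csK cov]] := @cover_seq _ K r cK (fun x _ => (rP x).1).
have [B [B0 HB]] := @seq_max _ cs (fun c => `|f c|).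
exists (B + 1); split; first by apply: addr_ge0.
move=> x Kx; have [c cc cx] := cov x Kx.
have h := (rP c).2 x cx.
rewrite (_ : f x = f c - (f c - f x)); last by rewrite opprB addrC subrK.
apply: le_trans (ler_normB _ _) _.
by rewrite lerD // ?HB // ltW.
Qed.

Lemma ball_compact m (r : R) : 0 < r -> compact [set v : 'rV[R]_m | `|v| <= r].
Proof.
move=> r0.
have -> : [set v : 'rV[R]_m | `|v| <= r] = closed_ball (0 : 'rV[R]_m) r.
  by rewrite closed_ballE //; apply/funext => v /=; rewrite /closed_ball_ /= sub0r normrN.
apply: bounded_closed_compact; last exact: closed_ball_closed.
exists r; split; first by rewrite num_real.
move=> M rM v; rewrite closed_ballE // /closed_ball_ /= sub0r normrN => Hv.
exact: le_trans Hv (ltW rM).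
Qed.

Lemma compact_norm_bound (U : normedModType R) (K : set U) :
  compact K -> exists r, 0 < r /\ forall x, K x -> `|x| <= r.
Proof.
move=> cK.
have cid : cont (@id U) by apply: (@cont_lip _ _ _ id 1 ltr01) => x y; rewrite mul1r.
have [B [B0 HB]] := @cont_bounded _ _ id K cid cK.
exists (B + 1); split; first by apply: ltr_wpDl.
by move=> x Kx; apply: le_trans (HB x Kx) _; rewrite lerDl.
Qed.

End Cpt.

Section Approx.
Variable R : realType.
Variable n : nat.
Local Notation V := 'rV[R]_(n.+1).
Local Notation W := 'rV[R]_n.

Definition NN (g : V -> V) := @nn_from R n.+1 n.+1 g.

Definition ApproxK (T : V -> V) (K : set V) :=
  forall e : R, 0 < e -> exists g, NN g /\ forall x, K x -> `|T x - g x| < e.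

Definition Approx (T : V -> V) := forall K, compact K -> ApproxK T K.

Lemma NN_comp g1 g2 : NN g1 -> NN g2 -> NN (fun x => g1 (g2 x)).
Proof. by move=> h1 h2; apply: nn_comp. Qed.

Lemma approxK_lim T K :
  (forall e : R, 0 < e -> exists T', ApproxK T' K /\ forall x, K x -> `|T x - T' x| <= e) ->
  ApproxK T K.
Proof.
move=> H e e0; have [T' [AT' HT']] := H _ (hgt0 e0).
have [g [Ng Hg]] := AT' _ (hgt0 e0); exists g; split => // x Kx.
rewrite (_ : T x - g x = (T x - T' x) + (T' x - g x)); last by rewrite addrA subrK.
apply: le_lt_trans (ler_normD _ _) _.
by rewrite (splitr e); apply: ler_ltD; [exact: HT' | exact: Hg].
Qed.

Lemma approx_comp T1 T2 : cont T1 -> cont T2 -> Approx T1 -> Approx T2 ->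
  Approx (fun x => T1 (T2 x)).
Proof.
move=> c1 c2 A1 A2 K cK e e0.
have [B [B0 HB]] := cont_bounded c2 cK.
set K2 := [set v : V | `|v| <= B + 1].
have cK2 : compact K2 by apply: ball_compact; apply: ltr_wpDl.
have [d [d0 Hd]] := unif c1 cK2 (hgt0 e0).
have [g2 [N2 H2]] := A2 K cK (Num.min d 1) (ltac:(by rewrite lt_min d0 ltr01)).
have [g1 [N1 H1]] := A1 K2 cK2 (e/2) (hgt0 e0).
exists (fun x => g1 (g2 x)); split; first exact: NN_comp.
move=> x Kx.
have Ht := H2 x Kx; move: Ht; rewrite lt_min => /andP[Hd2 H12].
have K2T : K2 (T2 x) by rewrite /K2 /=; apply: le_trans (HB x Kx) _; rewrite lerDl.
have K2g : K2 (g2 x).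
  rewrite /K2 /= (_ : g2 x = T2 x - (T2 x - g2 x)); last by rewrite opprB addrC subrK.
  by apply: le_trans (ler_normB _ _) _; apply: lerD; [exact: HB | exact: ltW].
rewrite (_ : T1 (T2 x) - g1 (g2 x) = (T1 (T2 x) - T1 (g2 x)) + (T1 (g2 x) - g1 (g2 x))); last by rewrite addrA subrK.
apply: le_lt_trans (ler_normD _ _) _.
by rewrite (splitr e) ltrD // ?Hd ?H1.
Qed.


Lemma NN_ForM_coord (j : 'I_n.+1) (c a : R) : NN (ForM (fun x => c * x 0 j + a)).
Proof.
set e : V := delta_mx 0 ord_max.
have -> : ForM (fun x : V => c * x 0 j + a) =
    affine (1 + (c *: delta_mx j 0) *m e) (a *: e).
  apply: funext => x; apply/rowP => k.
  rewrite /affine mulmxDr mulmx1 mulmxA -scalemxAr -colE.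
  rewrite [c *: col j x]mx11_scalar mul_scalar_mx ForME !mxE.
  by rewrite eqxx /=; case: eqP => _; rewrite ?mulr1 ?mulr0 ?addr0 // addrA.
exact: nn_out.
Qed.

Lemma approx_NN T : NN T -> Approx T.
Proof. by move=> NT K _ e e0; exists T; split => // x _; rewrite subrr normr0. Qed.

Lemma approx_ext T1 T2 : (forall x, T1 x = T2 x) -> Approx T1 -> Approx T2.
Proof. by move=> H; rewrite (_ : T1 = T2) //; apply: funext. Qed.

Lemma cont_ext (U1 U2 : normedModType R) (T1 T2 : U1 -> U2) :
  (forall x, T1 x = T2 x) -> cont T1 -> cont T2.
Proof. by move=> H; rewrite (_ : T1 = T2) //; apply: funext. Qed.

End Approx.

Section Bend.
Variable R : realType.
Variable n : nat.
Local Notation V := 'rV[R]_(n.+1).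
Local Notation W := 'rV[R]_n.
Local Notation NN := (@NN R n).

Definition reg (L : R) (x : V) := forall j : 'I_n, -L <= frt x 0 j.
Definition ExR (T : V -> V) := forall L, exists g, NN g /\ forall x, reg L x -> g x = T x.

Lemma reg_coord L x (j : 'I_n.+1) : reg L x -> j != ord_max -> -L <= x 0 j.
Proof.
move=> H jn; have jlt : (j < n)%N.
  move: (ltn_ord j); rewrite ltnS leq_eqVlt => /orP[/eqP jE|//].
  by move: jn; rewrite (_ : j = ord_max) ?eqxx //; apply: val_inj.
have := H (Ordinal jlt); rewrite frtE.
by rewrite (_ : widen_ord _ (Ordinal jlt) = j) //; apply: val_inj.
Qed.

Lemma reg_ForM L G x : reg L x -> reg L (ForM G x).
Proof. by rewrite /reg frt_ForM. Qed.

Definition bendf (k p : R) (y : R) := p + k * lrelu k^-1 (y - p).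

Lemma lrelu_pos b (y : R) : 0 <= y -> lrelu b y = y.
Proof. by move=> h; rewrite /lrelu h. Qed.

Lemma lrelu_neg b (y : R) : y < 0 -> lrelu b y = b * y.
Proof. by move=> h; rewrite /lrelu leNgt h. Qed.

Lemma ExR_bend k p : k != 0 -> ExR (lift1 (bendf k p)).
Proof.
move=> k0 L.
pose b1 : V := \row_j (if j == ord_max then - p else L).
pose A2 : 'M[R]_(n.+1) := diag_mx (\row_j (if j == ord_max then k else 1)).
pose b2 : V := \row_j (if j == ord_max then p else - L).
exists (fun x => affine A2 b2 (lrelu_vec k^-1 (affine 1 b1 x))); split.
  by apply: (@nn_layer R n.+1 n.+1 n.+1 1 b1 k^-1) => //; exact: nn_out.
move=> x rx; apply/rowP => j.
rewrite /affine mul_mx_diag mulmx1 /lift1 ForME !mxE.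
case: eqP => [->|/eqP jn].
  by rewrite /bendf; ring.
rewrite mulr1 lrelu_pos; first by ring.
by have := reg_coord rx jn; rewrite -subr_ge0 opprK.
Qed.

Lemma ExR_NN T : NN T -> ExR T.
Proof. by move=> NT L; exists T. Qed.

Lemma ExR_comp T1 T2 : ExR T1 -> ExR T2 -> (forall L x, reg L x -> reg L (T2 x)) ->
  ExR (fun x => T1 (T2 x)).
Proof.
move=> E1 E2 H L; have [g1 [N1 H1]] := E1 L; have [g2 [N2 H2]] := E2 L.
exists (fun x => g1 (g2 x)); split; first exact: NN_comp.
by move=> x rx; rewrite H2 // H1 //; apply: H.
Qed.

Lemma ExR_ext T1 T2 : (forall x, T1 x = T2 x) -> ExR T1 -> ExR T2.
Proof. by move=> H; rewrite (_ : T1 = T2) //; apply: funext. Qed.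

Lemma approx_ExR T : ExR T -> Approx T.
Proof.
move=> E K cK e e0; have [r [r0 Hr]] := compact_norm_bound cK.
have [g [Ng Hg]] := E r; exists g; split => // x Kx.
rewrite Hg ?subrr ?normr0 // => j; rewrite frtE.
have h := le_trans (mxnorm_coord x 0 (widen_ord (leq_pred n.+1) j)) (Hr x Kx).
by move: h; rewrite ler_norml => /andP[].
Qed.

End Bend.

Section Shear.
Variable R : realType.
Variable n : nat.
Local Notation V := 'rV[R]_(n.+1).
Local Notation W := 'rV[R]_n.
Local Notation NN := (@NN R n).
Local Notation relu := (@lrelu R 0).

Definition Sclass (phi : W -> R) := cont phi /\ Approx (sh phi).

Lemma Sclass_ext phi psi : (forall v, phi v = psi v) -> Sclass phi -> Sclass psi.
Proof. by move=> H; rewrite (_ : phi = psi) //; apply: funext. Qed.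

Lemma cont_R_add (U : normedModType R) (f g : U -> R) : cont f -> cont g ->
  cont (fun x => f x + g x).
Proof.
move=> cf cg x e e0.
have [d1 [d10 H1]] := cf x (e/2) (hgt0 e0).
have [d2 [d20 H2]] := cg x (e/2) (hgt0 e0).
exists (Num.min d1 d2); split; first by rewrite lt_min d10 d20.
move=> y; rewrite lt_min => /andP[xy1 xy2].
rewrite (_ : _ - _ = (f x - f y) + (g x - g y)); last by ring.
apply: le_lt_trans (ler_normD _ _) _.
by rewrite (splitr e) ltrD // ?H1 ?H2.
Qed.

Lemma cont_const (U1 U2 : normedModType R) (a : U2) : cont (fun _ : U1 => a).
Proof. by move=> x e e0; exists 1; split => // y _; rewrite subrr normr0. Qed.

Lemma cont_scale (U : normedModType R) (f : U -> R) (c : R) : cont f ->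
  cont (fun x => c * f x).
Proof.
move=> cf x e e0.
have [d [d0 H]] := cf x (e / (`|c| + 1)) (divr_gt0 e0 (ltr_wpDl (normr_ge0 c) ltr01)).
exists d; split => // y xy; rewrite -mulrBr normrM.
have h := H y xy.
rewrite ltr_pdivlMr ?(ltr_wpDl (normr_ge0 c) ltr01) // in h.
apply: le_lt_trans h.
by rewrite mulrC; apply: ler_wpM2l => //; rewrite lerDl.
Qed.

Lemma relu_lip (x y : R) : `|relu x - relu y| <= `|x - y|.
Proof.
rewrite ler_norml; have h1 := ler_norm (x - y); have h2 := ler_norm (y - x).
rewrite distrC in h2; rewrite /lrelu.
by case: (leP 0 x) => hx; case: (leP 0 y) => hy; rewrite ?mul0r; apply/andP; split; lra.
Qed.

Lemma cont_relu : cont (fun y : R => relu y).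
Proof. by apply: (@cont_lip _ _ _ _ 1) => // x y; rewrite mul1r relu_lip. Qed.

Lemma cont_D (c : R) : cont (ForM (fun x : V => c * x 0 ord_max + 0)).
Proof.
apply: cont_ForM; apply: cont_R_add; last exact: cont_const.
by apply: cont_scale; apply: cont_coord.
Qed.

Lemma S_const a : Sclass (fun _ => a).
Proof.
split; first exact: cont_const.
apply: (approx_ext (T1 := ForM (fun x : V => 0 * x 0 ord_max + a))).
  by move=> x; apply: ForM_ext; rewrite mul0r add0r.
by apply: approx_NN; apply: NN_ForM_coord.
Qed.

Lemma S_coord (i : 'I_n) : Sclass (fun v => v 0 i).
Proof.
split.
  by apply: (@cont_lip _ _ _ _ 1) => // x y; rewrite mul1r; have := mxnorm_coord (x - y) 0 i; rewrite !mxE.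
apply: (approx_ext (T1 := ForM (fun x : V => 1 * x 0 (widen_ord (leq_pred n.+1) i) + 0))).
  by move=> x; apply: ForM_ext; rewrite mul1r addr0 frtE.
by apply: approx_NN; apply: NN_ForM_coord.
Qed.

Lemma sh_add (phi psi : W -> R) (x : V) : sh psi (sh phi x) = sh (fun v => phi v + psi v) x.
Proof. by rewrite /sh ForM_comp; apply: ForM_ext; rewrite frt_ForM. Qed.

Lemma S_add phi psi : Sclass phi -> Sclass psi -> Sclass (fun v => phi v + psi v).
Proof.
move=> [c1 A1] [c2 A2]; split; first exact: cont_R_add.
apply: (approx_ext (T1 := fun x => sh psi (sh phi x))); first by move=> x; exact: sh_add.
by apply: approx_comp => //; apply: cont_sh.
Qed.

Lemma S_scale c phi : Sclass phi -> Sclass (fun v => c * phi v).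
Proof.
move=> [c1 A1]; have [->|c0] := eqVneq c 0.
  by apply: (Sclass_ext (phi := fun _ => 0)); [move=> v; rewrite mul0r | exact: S_const].
split; first exact: cont_scale.
pose D (a : R) := ForM (fun x : V => (a - 1) * x 0 ord_max + 0).
have AD a : Approx (D a) by apply: approx_NN; apply: NN_ForM_coord.
have cD a : cont (D a) by apply: cont_D.
apply: (approx_ext (T1 := fun x => D c (sh phi (D c^-1 x)))).
  move=> x; apply/rowP => j; rewrite /D /sh !ForME !frt_ForM !eqxx.
  by case: eqP => [->|_] //; field.
apply: approx_comp => //.
  by apply: cont_comp; [exact: cD | exact: cont_sh].
by apply: approx_comp => //; apply: cont_sh.
Qed.

End Shear.

Section Shear2.
Variable R : realType.
Variable n : nat.
Local Notation V := 'rV[R]_(n.+1).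
Local Notation W := 'rV[R]_n.
Local Notation NN := (@NN R n).
Local Notation relu := (@lrelu R 0).

Lemma lrelu_relu b (y : R) : lrelu b y = relu y + b * (y - relu y).
Proof. by rewrite /lrelu; case: (leP 0 y) => h; ring. Qed.

Lemma cont_bendf k p : cont (@bendf R k p).
Proof.
apply: (@cont_ext _ _ _ (fun y => p + k * (relu (y - p) + k^-1 * ((y - p) - relu (y - p))))).
  by move=> y; rewrite /bendf (lrelu_relu k^-1).
have cyp : cont (fun y : R => y - p).
  by apply: cont_R_sub; [apply: (@cont_lip _ _ _ _ 1) => // x y; rewrite mul1r | exact: cont_const].
have cr := cont_comp cyp (@cont_relu R).
apply: cont_R_add; first exact: cont_const.
apply: cont_scale; apply: cont_R_add => //.
by apply: cont_scale; apply: cont_R_sub.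
Qed.

Lemma bendf_relu (M y : R) : 0 < M -> bendf (1 + M^-1) 0 y = y + relu (y / M).
Proof.
move=> M0; have k0 : 0 < 1 + M^-1 by rewrite ltr_wpDr ?invr_ge0 ?ltW.
rewrite /bendf add0r subr0 /lrelu.
case: (leP 0 y) => hy.
  have h : 0 <= y / M by rewrite divr_ge0 // ltW.
  by rewrite h; ring.
have h : y / M < 0 by rewrite ltr_pdivrMr // mul0r.
by rewrite leNgt h /= mul0r addr0 mulrA mulfV ?mul1r // gt_eqF.
Qed.


Lemma S_relu (phi : W -> R) : Sclass phi -> Sclass (fun v => relu (phi v)).
Proof.
move=> [c1 A1]; split; first exact: (cont_comp c1 (@cont_relu R)).
move=> K cK; have [r [r0 Hr]] := compact_norm_bound cK.
apply: approxK_lim => e e0.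
pose M := (r + 1) / e.
have M0 : 0 < M by rewrite divr_gt0 // ltr_wpDl // ltW.
pose k := 1 + M^-1.
have k0 : k != 0 by rewrite gt_eqF // ltr_wpDr ?invr_ge0 ?ltW.
have [cM AM] := S_scale M (conj c1 A1).
have [cM' AM'] := S_scale (- M) (conj c1 A1).
exists (fun x => sh (fun v => - M * phi v) (lift1 (bendf k 0) (sh (fun v => M * phi v) x))).
have cB : cont (@lift1 R n (bendf k 0)) by apply: cont_lift1; exact: cont_bendf.
have AB : Approx (@lift1 R n (bendf k 0)) by exact: approx_ExR (@ExR_bend R n k 0 k0).
have c2 : cont (fun x => lift1 (bendf k 0) (sh (fun v => M * phi v) x)).
  by apply: cont_comp; [exact: cont_sh | exact: cB].
have A2 : Approx (fun x => lift1 (bendf k 0) (sh (fun v => M * phi v) x)).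
  by apply: approx_comp => //; exact: cont_sh.
have AT : Approx (fun x => sh (fun v => - M * phi v) (lift1 (bendf k 0) (sh (fun v => M * phi v) x))).
  by apply: approx_comp => //; exact: cont_sh.
split; first exact: AT K cK.
move=> x Kx.
have -> : sh (fun v => - M * phi v) (lift1 (bendf k 0) (sh (fun v => M * phi v) x)) =
    ForM (fun y : V => relu (phi (frt y) + y 0 ord_max / M)) x.
  apply/rowP => j; rewrite /sh /lift1 !ForME !frt_ForM !eqxx.
  case: eqP => // _; rewrite bendf_relu //.
  rewrite (_ : (x 0 ord_max + M * phi (frt x)) / M = phi (frt x) + x 0 ord_max / M).
    by ring.
  by field; rewrite gt_eqF.
apply: le_trans (ForM_dist1 _ _ _) _.
apply: le_trans (relu_lip _ _) _.
rewrite opprD addNKr normrN normrM [`|M^-1|]gtr0_norm ?invr_gt0 //.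
rewrite ler_pdivrMr // /M mulrCA mulfV ?mulr1; last by rewrite gt_eqF.
apply: le_trans (mxnorm_coord x 0 ord_max) _.
by apply: le_trans (Hr x Kx) _; rewrite lerDl.
Qed.

End Shear2.

Section Shear3.
Variable R : realType.
Variable n : nat.
Local Notation V := 'rV[R]_(n.+1).
Local Notation W := 'rV[R]_n.
Local Notation relu := (@lrelu R 0).

Lemma max_relu (a b : R) : Num.max a b = b + relu (a - b).
Proof.
rewrite /lrelu; case: (leP 0 (a - b)) => h.
  by rewrite max_l; [ring | lra].
by rewrite max_r; [ring | lra].
Qed.

Lemma S_max (phi psi : W -> R) : Sclass phi -> Sclass psi ->
  Sclass (fun v => Num.max (phi v) (psi v)).
Proof.
move=> h1 h2.
apply: (Sclass_ext (phi := fun v => psi v + relu (phi v + (-1) * psi v))).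
  by move=> v; rewrite max_relu mulN1r.
apply: S_add => //; apply: S_relu; apply: S_add => //; exact: S_scale.
Qed.

Lemma S_abs (phi : W -> R) : Sclass phi -> Sclass (fun v => `|phi v|).
Proof.
move=> h; apply: (Sclass_ext (phi := fun v => Num.max (phi v) ((-1) * phi v))).
  move=> v; rewrite mulN1r; case: (leP 0 (phi v)) => h0.
    by rewrite max_l ?ger0_norm //; lra.
  by rewrite max_r ?ltr0_norm //; lra.
by apply: S_max => //; exact: S_scale.
Qed.

Lemma S_bigmax (I : Type) (r : seq I) (F : I -> W -> R) a :
  (forall i, Sclass (F i)) -> Sclass (fun v => \big[Num.max/a]_(i <- r) F i v).
Proof.
move=> H; elim: r => [|i r IH].
  by apply: (Sclass_ext (phi := fun _ => a)) => [v|]; [rewrite big_nil | exact: S_const].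
apply: (Sclass_ext (phi := fun v => Num.max (F i v) (\big[Num.max/a]_(j <- r) F j v))).
  by move=> v; rewrite big_cons.
exact: S_max.
Qed.

Lemma S_normdist (c : W) : Sclass (fun v => `|v - c|).
Proof.
apply: (Sclass_ext (phi := fun v => \big[Num.max/0]_(ij <- index_enum ('I_1 * 'I_n)%type)
     `|v 0 ij.2 + (-1) * c 0 ij.2|)).
  move=> v; rewrite [RHS]/normr /= mx_normrE; apply: eq_bigr => ij _.
  by rewrite !mxE mulN1r ord1.
apply: S_bigmax => ij; apply: S_abs; apply: S_add; first exact: S_coord.
exact: S_const.
Qed.

End Shear3.

Section Dense.
Variable R : realType.
Variable n : nat.
Local Notation V := 'rV[R]_(n.+1).
Local Notation W := 'rV[R]_n.
Local Notation relu := (@lrelu R 0).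

Lemma relu_ge (y : R) : y <= relu y.
Proof. by rewrite /lrelu; case: (leP 0 y) => h //; rewrite mul0r ltW. Qed.

Lemma relu_ge0 (y : R) : 0 <= relu y.
Proof. by rewrite /lrelu; case: (leP 0 y) => h //; rewrite mul0r. Qed.

Lemma S_dense (phi : W -> R) (K : set W) (e : R) : cont phi -> compact K -> 0 < e ->
  exists psi, Sclass psi /\ forall v, K v -> `|phi v - psi v| <= e.
Proof.
move=> cp cK e0.
have [B [B0 HB]] := cont_bounded cp cK.
have [d' [d'0 Hd']] := unif cp cK (hgt0 e0).
pose d := d' / 2; have d0 : 0 < d by rewrite divr_gt0.
have [cs [csK cov]] := @cover_seq _ _ K (fun _ => d) cK (fun _ _ => d0).
pose M := 2 * B / d.
have M0 : 0 <= M by rewrite divr_ge0 // ?mulr_ge0 // ltW.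
have Md : M * d = 2 * B by rewrite /M mulrAC -mulrA mulfV ?mulr1 // gt_eqF.
pose term (c : W) (v : W) := phi c - e/2 + (- M) * relu (`|v - c| + (- d)).
exists (fun v => \big[Num.max/(-B)]_(c <- cs) term c v); split.
  apply: S_bigmax => c; apply: S_add; first exact: S_const.
  apply: S_scale; apply: S_relu; apply: S_add; [exact: S_normdist | exact: S_const].
move=> v Kv.
have Bv : - B <= phi v <= B by rewrite -ler_norml; exact: HB.
have up : \big[Num.max/(-B)]_(c <- cs) term c v <= phi v.
  rewrite big_seq; apply: bigmax_le => [|c cc]; first by case/andP: Bv.
  have Kc := csK c cc.
  have Bc : - B <= phi c <= B by rewrite -ler_norml; exact: HB.
  rewrite /term mulNr.
  set t := relu _.
  have t0 : 0 <= t by exact: relu_ge0.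
  have Mt : 0 <= M * t by exact: mulr_ge0.
  case: (ltP (`|v - c|) d') => hvc.
  - have := Hd' c v Kc; rewrite distrC => /(_ hvc).
    rewrite ltr_norml => /andP[h1 h2]; lra.
  - have : d <= t by apply: le_trans (relu_ge _); rewrite /d; lra.
    move=> dt; have : M * d <= M * t by exact: ler_wpM2l.
    rewrite Md => h; case/andP: Bc => _ h3; case/andP: Bv => h4 _; lra.
have lo : phi v - e <= \big[Num.max/(-B)]_(c <- cs) term c v.
  have [c cc cv] := cov v Kv.
  have Kc := csK c cc.
  apply: le_trans (le_bigmax_seq (-B) c xpredT (fun c => term c v) cc isT).
  rewrite /term /= (_ : relu _ = 0); last first.
    by rewrite lrelu_neg ?mul0r // distrC; lra.
  have : `|c - v| < d' by apply: lt_trans cv _; rewrite /d; lra.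
  move/(Hd' c v Kc); rewrite ltr_norml => /andP[h1 h2].
  rewrite mulr0 addr0; lra.
by rewrite ler_norml; apply/andP; split; lra.
Qed.

Lemma frt_norm (x : V) : `|frt x| <= `|x|.
Proof. by apply: mxnorm_le => // i j; rewrite ord1 frtE; exact: mxnorm_coord. Qed.

Lemma S_all (phi : W -> R) : cont phi -> Sclass phi.
Proof.
move=> cp; split => // K cK.
have [r [r0 Hr]] := compact_norm_bound cK.
have cK' := @ball_compact R n r r0.
apply: approxK_lim => e e0.
have [psi [[cps Aps] Hps]] := S_dense cp cK' e0.
exists (sh psi); split; first exact: Aps K cK.
move=> x Kx; apply: le_trans (ForM_dist1 _ _ _) _.
by apply: Hps; rewrite /=; apply: le_trans (frt_norm x) (Hr x Kx).
Qed.

End Dense.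

Section OneD.
Variable R : realType.

Fixpoint qf (y hv s : nat -> R) (k : nat) (t : R) : R :=
  match k with
  | 0 => hv 0%N + s 0%N * (t - y 0%N)
  | k'.+1 => qf y hv s k' (bendf (s k'.+1 / s k') (y k'.+1) t)
  end.

Lemma bendf_ge k p (t : R) : p <= t -> bendf k p t = p + k * (t - p).
Proof. by move=> h; rewrite /bendf lrelu_pos // subr_ge0. Qed.

Lemma bendf_le k p (t : R) : k != 0 -> t <= p -> bendf k p t = t.
Proof.
move=> k0 h; rewrite /bendf /lrelu; case: (leP 0 (t - p)) => h2.
  have -> : t = p by apply/le_anti; rewrite h /= -subr_ge0.
  by rewrite subrr mulr0 addr0.
by rewrite mulrA mulfV // mul1r addrC subrK.
Qed.

Section Q.
Variables (y hv s : nat -> R).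
Hypothesis s0 : forall k, 0 < s k.
Hypothesis yinc : forall k, y k <= y k.+1.
Hypothesis hvS : forall k, hv k.+1 = hv k + s k * (y k.+1 - y k).

Lemma qA k t : y k <= t -> qf y hv s k t = hv k + s k * (t - y k).
Proof.
elim: k t => [//|k IH] t hk /=.
have ht : y k.+1 <= t by [].
rewrite bendf_ge // IH; last first.
  apply: le_trans (yinc k) _; rewrite lerDl mulr_ge0 // ?subr_ge0 //.
  by rewrite divr_ge0 // ltW.
rewrite hvS; field.
by rewrite gt_eqF.
Qed.

Lemma qB k t : t <= y k.+1 -> qf y hv s k.+1 t = qf y hv s k t.
Proof.
move=> h /=; rewrite bendf_le //.
by rewrite gt_eqF // divr_gt0.
Qed.

Lemma qErr (h : R -> R) (e : R) (N : nat) :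
  (forall j t, (j < N)%N -> y j <= t <= y j.+1 -> `|hv j + s j * (t - y j) - h t| <= e) ->
  forall k t, (k < N)%N -> y 0%N <= t <= y k.+1 -> `|qf y hv s k t - h t| <= e.
Proof.
move=> cell; elim=> [|k IH] t kN ht; first exact: cell.
case: (leP t (y k.+1)) => h1.
  rewrite qB // IH //; first exact: ltnW.
  by case/andP: ht => -> _.
rewrite qA; last exact: ltW.
by apply: cell => //; case/andP: ht => _ ->; rewrite ltW.
Qed.

End Q.

End OneD.

Section OneD2.
Variable R : realType.
Variable n : nat.
Local Notation V := 'rV[R]_(n.+1).

Lemma ExR_qf (y hv s : nat -> R) : (forall k, 0 < s k) ->
  forall k, ExR (@lift1 R n (qf y hv s k)).
Proof.
move=> s0; elim=> [|k IH].
  apply: (ExR_ext (T1 := ForM (fun x : V => (s 0%N - 1) * x 0 ord_max + (hv 0%N - s 0%N * y 0%N)))).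
    by move=> x; apply: ForM_ext => /=; ring.
  by apply: ExR_NN; apply: NN_ForM_coord.
apply: (ExR_ext (T1 := fun x => lift1 (qf y hv s k) (lift1 (bendf (s k.+1 / s k) (y k.+1)) x))).
  by move=> x; rewrite lift1_comp.
apply: ExR_comp => //; first by apply: ExR_bend; rewrite gt_eqF // divr_gt0.
by move=> L x; exact: reg_ForM.
Qed.

Lemma approx_lift1 (h : R -> R) : cont h -> (forall a b, a < b -> h a < h b) ->
  Approx (@lift1 R n h).
Proof.
move=> ch hinc K cK.
have [r [r0 Hr]] := compact_norm_bound cK.
apply: approxK_lim => e e0.
have [dl [dl0 Hdl]] := unif ch (@segment_compact R (- r) r) e0.
pose N := (Num.Def.archi_bound (2 * r / dl)).+1.
have N0 : (0 < N%:R :> R) by rewrite ltr0n.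
have HN : 2 * r / dl < N%:R.
  apply: lt_trans (archi_boundP _) _; first by rewrite divr_ge0 // ?mulr_ge0 // ltW.
  by rewrite ltr_nat.
pose D := 2 * r / N%:R.
have D0 : 0 < D by rewrite divr_gt0 // mulr_gt0.
have Ddl : D < dl.
  by rewrite /D ltr_pdivrMr // [dl * _]mulrC -ltr_pdivrMr.
pose y (k : nat) := - r + k%:R * D.
pose hv (k : nat) := h (y k).
pose s (k : nat) := (hv k.+1 - hv k) / D.
have yS k : y k.+1 = y k + D by rewrite /y -addn1 natrD; ring.
have s0 k : 0 < s k by rewrite divr_gt0 // subr_gt0 /hv hinc // yS ltrDl.
have yinc k : y k <= y k.+1 by rewrite yS lerDl ltW.
have hvS k : hv k.+1 = hv k + s k * (y k.+1 - y k).
  by rewrite yS /s; field; rewrite gt_eqF.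
have y0 : y 0%N = - r by rewrite /y mul0r addr0.
have yN : y N = r by rewrite /y /D mulrCA mulfV ?mulr1 ?gt_eqF //; ring.
have ymono j k : (j <= k)%N -> y j <= y k.
  by move=> jk; rewrite /y lerD2l; apply: ler_wpM2r; [exact: ltW | rewrite ler_nat].
exists (@lift1 R n (qf y hv s N.-1)); split.
  have EQ : ExR (@lift1 R n (qf y hv s N.-1)) by apply: ExR_qf.
  exact: approx_ExR EQ K cK.
move=> x Kx; apply: le_trans (ForM_dist1 _ _ _) _.
rewrite opprB addrA subrK.
have xr : - r <= x 0 ord_max <= r.
  by rewrite -ler_norml; apply: le_trans (mxnorm_coord x 0 ord_max) (Hr x Kx).
rewrite distrC; apply: (qErr s0 yinc hvS (N := N)) => //; last first.
  by rewrite y0 (_ : N.-1.+1 = N) // yN.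
move=> j t jN /andP[t1 t2].
have yjr : - r <= y j <= r by rewrite -y0 -yN !ymono // ltnW.
have yj1r : - r <= y j.+1 <= r by rewrite -y0 -yN !ymono.
have hyj : `|h (y j) - h (y j.+1)| < e.
  apply: Hdl; first by rewrite /= in_itv /=.
  by rewrite yS opprD addNKr normrN gtr0_norm.
have hm a b : a <= b -> h a <= h b.
  by rewrite le_eqVlt => /orP[/eqP ->//|/hinc/ltW].
have h1 := hm _ _ t1; have h2 := hm _ _ t2.
have sD : s j * (t - y j) <= hv j.+1 - hv j.
  rewrite /s mulrAC ler_pdivrMr // ler_wpM2l // ?subr_ge0 ?hm ?yinc //.
  by rewrite lerBlDl -yS.
have sp : 0 <= s j * (t - y j) by rewrite mulr_ge0 // ?subr_ge0 // ltW.
have hyj' : h (y j.+1) - h (y j) < e.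
  by apply: le_lt_trans (ler_norm _) _; rewrite distrC.
move: sD sp; rewrite /hv => sD sp.
set S := s j * (t - y j) in sD sp *.
by rewrite ler_norml; apply/andP; split; lra.
Qed.

End OneD2.

Section Final.
Variable R : realType.
Variable n : nat.
Local Notation V := 'rV[R]_(n.+1).
Local Notation W := 'rV[R]_n.

Lemma mulmx_norm (v : V) (A : 'M[R]_(n.+1)) : `|v *m A| <= (n.+1)%:R * `|A| * `|v|.
Proof.
apply: mxnorm_le; first by rewrite !mulr_ge0.
move=> i j; rewrite !mxE.
apply: le_trans (ler_norm_sum _ _ _) _.
have H2 : \sum_(k < n.+1) `|v i k * A k j| <= \sum_(k < n.+1) (`|A| * `|v|).
  apply: ler_sum => k _; rewrite normrM mulrC ler_pM //.
    by have := mxnorm_coord A k j.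
  by rewrite ord1; have := mxnorm_coord v 0 k.
apply: le_trans H2 _.
by rewrite sumr_const card_ord -mulrA mulr_natl.
Qed.

Lemma cont_affine (A : 'M[R]_(n.+1)) (b : V) : cont (affine A b).
Proof.
apply: (@cont_lip _ _ _ _ ((n.+1)%:R * `|A| + 1)); first by rewrite ltr_wpDl // mulr_ge0.
move=> x y; rewrite /affine opprD addrACA subrr addr0 -mulmxBl.
apply: le_trans (mulmx_norm _ _) _.
by rewrite ler_wpM2r // lerDl.
Qed.

Lemma for_cont (f : R -> R) x : {for x, continuous f} ->
  forall e : R, 0 < e -> exists d : R, 0 < d /\ forall y, `|x - y| < d -> `|f x - f y| < e.
Proof.
move=> cf e e0; move: cf; move/cvgrPdist_lt/(_ e e0)/nbhs_normP => [d d0 H].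
by exists d; split => // y xy; apply: H.
Qed.

Definition Lg (y : R) := ln (Num.max y 1) + Num.min y 1 - 1.

Lemma LgE y : Lg y = if y <= 1 then y - 1 else ln y.
Proof.
rewrite /Lg; case: (leP y 1) => h.
  by rewrite ln1 add0r.
by rewrite addrK.
Qed.

Lemma ln_inc (a b : R) : 0 < a -> a < b -> ln a < ln b.
Proof.
move=> a0 ab; have b0 : 0 < b by apply: lt_trans ab.
by rewrite ltr_ln // posrE.
Qed.

Lemma Lg_inc a b : a < b -> Lg a < Lg b.
Proof.
move=> ab; rewrite !LgE.
case: (leP b 1) => hb.
  by rewrite ifT ?ltrD2r // (le_trans (ltW ab) hb).
case: (leP a 1) => ha.
  have : ln 1 < ln b by apply: ln_inc.
  rewrite ln1; lra.
by apply: ln_inc => //; apply: lt_trans ha.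
Qed.

Lemma max1_lip (x y : R) : `|Num.max x 1 - Num.max y 1| <= `|x - y|.
Proof.
rewrite ler_norml; have h1 := ler_norm (x - y); have h2 := ler_norm (y - x).
rewrite distrC in h2.
by case: (leP x 1) => hx; case: (leP y 1) => hy; apply/andP; split; lra.
Qed.

Lemma min1_lip (x y : R) : `|Num.min x 1 - Num.min y 1| <= `|x - y|.
Proof.
rewrite ler_norml; have h1 := ler_norm (x - y); have h2 := ler_norm (y - x).
rewrite distrC in h2.
by case: (leP x 1) => hx; case: (leP y 1) => hy; apply/andP; split; lra.
Qed.

Lemma cont_Lg : cont Lg.
Proof.
apply: cont_R_sub; last exact: cont_const.
apply: cont_R_add; last first.
  by apply: (@cont_lip _ _ _ _ 1) => // x y; rewrite mul1r min1_lip.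
move=> x e e0.
have m0 : 0 < Num.max x 1 by rewrite lt_max ltr01 orbT.
have [d [d0 H]] := for_cont (continuous_ln m0) e0.
exists d; split => // y xy; apply: H.
by apply: le_lt_trans (max1_lip _ _) xy.
Qed.

End Final.

Section ACFsec.
Variable R : realType.
Variable n : nat.
Local Notation V := 'rV[R]_(n.+1).
Local Notation W := 'rV[R]_n.

Definition Gst (s t : W -> R) (x : V) := (expR (s (frt x)) - 1) * x 0 ord_max + t (frt x).

Lemma approx_acf (s t : W -> R) : cont s -> cont t -> Approx (ForM (Gst s t)).
Proof.
move=> cs ct K cK.
have [r [r0 Hr]] := compact_norm_bound cK.
pose C := r + 2.
pose t' v := t v - C * expR (s v).
pose Phi := fun x => sh t' (lift1 expR (sh s (lift1 (@Lg R) (sh (fun _ => C) x)))).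
have E : forall x, K x -> Phi x = ForM (Gst s t) x.
  move=> x Kx; apply/rowP => j; rewrite /Phi /sh /lift1 !ForME !frt_ForM !eqxx.
  case: eqP => // ->.
  have xr : - r <= x 0 ord_max.
    by have := le_trans (mxnorm_coord x 0 ord_max) (Hr x Kx); rewrite ler_norml => /andP[].
  have y1 : 1 < x 0 ord_max + C by rewrite /C; lra.
  have -> : Lg (x 0 ord_max + C) = ln (x 0 ord_max + C) by rewrite LgE leNgt y1.
  have -> : x 0 ord_max + C + (ln (x 0 ord_max + C) - (x 0 ord_max + C)) + s (frt x) =
    ln (x 0 ord_max + C) + s (frt x) by ring.
  rewrite expRD lnK ?posrE; last by lra.
  by rewrite /t' /Gst; ring.
have cexp : cont (@expR R) by apply: continuous_cont; exact: continuous_expR.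
have ct' : cont t'.
  apply: cont_R_sub => //; apply: cont_scale; exact: cont_comp cs cexp.
have c5 : cont (@sh R n (fun _ => C)) by apply: cont_sh; exact: cont_const.
have A5 : Approx (@sh R n (fun _ => C)) by have [] := @S_const R n C.
have c4 : cont (@lift1 R n (@Lg R)) by apply: cont_lift1; exact: cont_Lg.
have A4 : Approx (@lift1 R n (@Lg R)) by apply: approx_lift1; [exact: cont_Lg | exact: Lg_inc].
have c3 : cont (@sh R n s) by exact: cont_sh.
have A3 : Approx (@sh R n s) by have [] := S_all cs.
have c2 : cont (@lift1 R n (@expR R)) by exact: cont_lift1.
have A2 : Approx (@lift1 R n (@expR R)).
  by apply: approx_lift1 => // a b ab; rewrite ltr_expR.
have c1 : cont (@sh R n t') by exact: cont_sh.
have A1 : Approx (@sh R n t') by have [] := S_all ct'.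
have AP : Approx Phi.
  apply: approx_comp => //; first by do 3 (apply: cont_comp => //).
  apply: approx_comp => //; first by do 2 (apply: cont_comp => //).
  apply: approx_comp => //; first by apply: cont_comp.
  exact: approx_comp.
move=> e e0; have [g [Ng Hg]] := AP K cK e e0.
by exists g; split => // x Kx; rewrite -E //; exact: Hg.
Qed.

Lemma cont_mul (U : normedModType R) (f g : U -> R) : cont f -> cont g ->
  cont (fun x => f x * g x).
Proof.
move=> cf cg; apply: continuous_cont => x; apply: continuousM.
  exact: cont_continuous cf x.
exact: cont_continuous cg x.
Qed.

Lemma cont_acf (s t : W -> R) : cont s -> cont t -> cont (ForM (Gst s t)).
Proof.
move=> cs ct; apply: cont_ForM; apply: cont_R_add; last exact: (cont_comp (@cont_frt R n) ct).
apply: cont_mul; last exact: cont_coord.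
apply: cont_R_sub; last exact: cont_const.
apply: cont_comp (cont_comp (@cont_frt R n) cs) _.
by apply: continuous_cont; exact: continuous_expR.
Qed.

End ACFsec.

Section INNsec.
Variable R : realType.
Variable n : nat.
Local Notation V := 'rV[R]_(n.+1).
Local Notation W := 'rV[R]_n.

Lemma ACF_good (g : V -> V) : @ACF R n.+1 g -> Approx g /\ cont g.
Proof.
move=> [s [t [cs [ct Hg]]]].
have cs' : cont s by apply: continuous_cont.
have ct' : cont t by apply: continuous_cont.
have E : forall x, ForM (Gst s t) x = g x.
  move=> x; rewrite Hg; apply/rowP => j; rewrite ForME !mxE /Gst.
  case: eqP => [->|/eqP jn].
    by rewrite ltnn /= (_ : (0 : 'I_1) = ord0) // /frt; ring.
  have jlt : (j < n)%N.
    move: (ltn_ord j); rewrite ltnS leq_eqVlt => /orP[/eqP jE|//].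
    by move: jn; rewrite (_ : j = ord_max) ?eqxx //; apply: val_inj.
  by rewrite ifT.
split; first exact: approx_ext E (approx_acf cs' ct').
exact: cont_ext E (cont_acf cs' ct').
Qed.


Lemma invaff_good (Wf : V -> V) : @inv_affine R n.+1 Wf -> Approx Wf /\ cont Wf.
Proof.
move=> [A [b [_ ->]]]; split; last exact: cont_affine.
by apply: approx_NN; apply: nn_out.
Qed.

Lemma comp3_good (W1 g h : V -> V) : Approx W1 /\ cont W1 -> Approx g /\ cont g ->
  Approx h /\ cont h -> Approx (W1 \o g \o h) /\ cont (W1 \o g \o h).
Proof.
move=> [A1 c1] [A2 c2] [A3 c3].
have cgh : cont (fun x => g (h x)) by apply: cont_comp.
have Agh : Approx (fun x => g (h x)) by apply: approx_comp.
split; first by apply: (approx_ext (T1 := fun x => W1 (g (h x)))) => //; apply: approx_comp.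
by apply: (cont_ext (T1 := fun x => W1 (g (h x)))) => //; apply: cont_comp.
Qed.

Lemma tail_good h : @inn_tail R n.+1 (@ACF R n.+1) h -> Approx h /\ cont h.
Proof.
elim=> [Wf HW|Wf g h' HW Hg _ IH]; first exact: invaff_good.
by apply: comp3_good => //; [exact: invaff_good | exact: ACF_good].
Qed.

Lemma INN_good f : @INN R n.+1 (@ACF R n.+1) f -> Approx f.
Proof.
move=> [Wf [g [h [HW [Hg [Hh ->]]]]]].
have [] := comp3_good (invaff_good HW) (ACF_good Hg) (tail_good Hh) => //.
Qed.

Lemma norm_inf_le (v : V) : @norm_inf R n.+1 v <= `|v|.
Proof. by rewrite /norm_inf; apply: bigmax_le => // i _; exact: mxnorm_coord. Qed.

End INNsec.

Theorem mainTheorem7 (R : realType) (d : nat) (hd : (2 <= d)%N)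
  (f : 'rV[R]_d -> 'rV[R]_d) (K : set 'rV[R]_d) (eps : R) :
  @INN R d (@ACF R d) f -> compact K -> 0 < eps ->
  exists g, @NN_LReLU R d g /\
    (ereal_sup [set (@norm_inf R d (f x - g x))%:E | x in K] < eps%:E)%E.
Proof.
case: d hd f K => [//|n] _ f K Hf cK e0.
have Af := INN_good Hf.
have [g [Ng Hg]] := Af K cK (eps/2) (hgt0 e0).
exists g; split; first exact: Ng.
apply: (@le_lt_trans _ _ (eps/2)%:E).
  apply: ge_ereal_sup => _ [x Kx <-]; rewrite lee_fin.
  exact: le_trans (norm_inf_le _) (ltW (Hg x Kx)).
by rewrite lte_fin; lra.
Qed.
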